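(* Let $M=\frac32-\sqrt2$. For real $f_2,f_3,y_2,y_3$ put $\hat A=1+(1-f_2)(1-y_2)+2(1-f_3)(1-y_3)$ and $\hat F_1=1/\hat A$, and define $$\hat\alpha(f_2,f_3,y_2,y_3)=\frac{1}{(\frac12-\hat F_1)\hat A}\Bigl((1-f_2)\,y_2(\tfrac12-y_2)+2Mf_2(1-\hat A)+2(1-f_3)\,y_3(\tfrac12-y_3)+4Mf_2(1-y_3)\Bigr).$$ Then for all $f_2,f_3,y_2,y_3\in[0,\frac12]$ satisfying $f_2+2f_3=1$, $\frac1{13}\le f_2\le\frac12$ and $0\le y_2,y_3\le\frac{6}{13}$, we have $\hat\alpha(f_2,f_3,y_2,y_3)\le\frac{9231}{10000}$.
   Context: In the paper's notation, with $\Phi(x)=\frac{1}{x(\frac12-x)}$, one has $y(\frac12-y)=1/\Phi(y)$ and $\frac{1}{(\frac12-\hat F_1)\hat A}=\frac{\Phi(\hat F_1)\hat F_1}{\hat A}$. Under the hypotheses $\hat A>2$, so $\hat\alpha$ is well defined. *)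

(* Defs.v *)
From Stdlib Require Import Reals Lra.
Open Scope R_scope.

Definition M : R := 3/2 - sqrt 2.

Definition Ahat (f2 f3 y2 y3 : R) : R :=
  1 + (1 - f2) * (1 - y2) + 2 * (1 - f3) * (1 - y3).

Definition F1hat (f2 f3 y2 y3 : R) : R := 1 / Ahat f2 f3 y2 y3.

Definition alphahat (f2 f3 y2 y3 : R) : R :=
  let A := Ahat f2 f3 y2 y3 in
  let F1 := F1hat f2 f3 y2 y3 in
  1 / ((1/2 - F1) * A) *
  ((1 - f2) * y2 * (1/2 - y2) + 2 * M * f2 * (1 - A)
   + 2 * (1 - f3) * y3 * (1/2 - y3) + 4 * M * f2 * (1 - y3)).

(* Main.v *)
Require Import Defs.
From Stdlib Require Import Reals Lra Psatz.
Open Scope R_scope.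

Lemma M_bounds : 857/10000 <= M <= 858/10000.
Proof.
  unfold M. assert (H := sqrt_pos 2). assert (H2 := sqrt_sqrt 2 ltac:(lra)).
  split; nra.
Qed.

Theorem lemma24 (f2 f3 y2 y3 : R) :
  0 <= f2 <= 1/2 -> 0 <= f3 <= 1/2 -> 0 <= y2 <= 1/2 -> 0 <= y3 <= 1/2 ->
  f2 + 2 * f3 = 1 ->
  1/13 <= f2 <= 1/2 ->
  0 <= y2 <= 6/13 -> 0 <= y3 <= 6/13 ->
  alphahat f2 f3 y2 y3 <= 9231/10000.
Proof.
  intros Hf2 Hf3 Hy2 Hy3 Hs Hf Hu Hv.
  assert (Hf3e : f3 = (1 - f2)/2) by lra. subst f3.
  destruct M_bounds as [Ml Mu].
  unfold alphahat, F1hat.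
  assert (HA : Ahat f2 ((1 - f2)/2) y2 y3 = 1 + (1 - f2) * (1 - y2) + (1 + f2) * (1 - y3)) by (unfold Ahat; field).
  remember (Ahat f2 ((1 - f2)/2) y2 y3) as A eqn:HAdef.
  assert (HA2 : A - 2 >= 1/13) by (rewrite HA; nra).
  assert (E : (1/2 - 1/A) * A = A/2 - 1) by (field; lra).
  rewrite E.
  set (N := (1 - f2) * y2 * (1 / 2 - y2) + 2 * M * f2 * (1 - A) +
    2 * (1 - (1 - f2) / 2) * y3 * (1 / 2 - y3) + 4 * M * f2 * (1 - y3)).
  set (c := 9231/10000).
  set (p := 6/13 - y2). set (q := 6/13 - y3).
  assert (Hp : 0 <= p) by (unfold p; lra).
  assert (Hq : 0 <= q) by (unfold q; lra).
  assert (Cq : 0 <= (1+f2)*(c-11/13) - 4*M*f2*(1-f2)) by (unfold c; nra).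
  assert (Cp : 0 <= (1-f2)*(c-11/13) + 4*M*f2*(1-f2)) by (unfold c; nra).
  assert (Key : 2 * (c * (A/2 - 1) - N) =
     (c/13 - 12/169) + p * ((1-f2)*(c-11/13) + 4*M*f2*(1-f2))
     + q * ((1+f2)*(c-11/13) - 4*M*f2*(1-f2)) + 2*(1-f2)*p^2 + 2*(1+f2)*q^2).
  { unfold N, p, q, c. rewrite HA. clear. field. }
  assert (G : N <= c * (A/2 - 1)).
  { assert (0 <= p * ((1-f2)*(c-11/13) + 4*M*f2*(1-f2))) by (apply Rmult_le_pos; lra).
    assert (0 <= q * ((1+f2)*(c-11/13) - 4*M*f2*(1-f2))) by (apply Rmult_le_pos; lra).
    assert (0 <= 2*(1-f2)*p^2) by (apply Rmult_le_pos; [lra| apply pow2_ge_0]).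
    assert (0 <= 2*(1+f2)*q^2) by (apply Rmult_le_pos; [lra| apply pow2_ge_0]).
    unfold c in *; lra. }
  assert (Hd : 0 < A/2 - 1) by lra.
  unfold Rdiv at 1. rewrite Rmult_1_l.
  apply (Rmult_le_reg_l (A/2 - 1)); [lra|].
  rewrite <- Rmult_assoc, Rinv_r by lra. lra.
Qed.
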